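(* Let $S\subset\mathbb{R}^3$ be the sphere of radius $1/2$ centered at $(0,0,1/2)$, and let $\pi_S:\mathbb{R}^2\to S$ be the stereographic projection (identifying $\mathbb{R}^2$ with the plane $z=0$, a point $(x,y,0)$ is mapped to the intersection point, other than $N=(0,0,1)$, of $S$ with the line through $N$ and $(x,y,0)$). Let $A\subset\mathbb{R}^2$ be an unbounded set with $0\notin\overline A$. Then $\overline{\dim}_BA=\overline{\dim}_B\pi_S(A)$ and $\underline{\dim}_BA=\underline{\dim}_B\pi_S(A)$, where the box dimensions of $\pi_S(A)$ are computed as a subset of $\mathbb{R}^3$. Furthermore, if $A$ is Minkowski nondegenerate, then so is $\pi_S(A)$.
   Context: For a nonempty bounded $B\subset\mathbb{R}^n$, with $B_\varepsilon$ its Euclidean $\varepsilon$-neighbourhood in $\mathbb{R}^n$ and $|B_\varepsilon|$ its Lebesgue measure, $\mathcal M^{*s}(B)=\limsup_{\varepsilon\to0}|B_\varepsilon|/\varepsilon^{n-s}$, $\mathcal M_*^s(B)$ is the same with $\liminf$, $\overline{\dim}_BB=\inf\{s\ge0:\mathcal M^{*s}(B)=0\}$, $\underline{\dim}_BB=\inf\{s\ge0:\mathcal M_*^{s}(B)=0\}$; $B$ is Minkowski nondegenerate if there is $d\ge0$ with $0<\mathcal M_*^d(B)\le\mathcal M^{*d}(B)<\infty$. For an unbounded $A\subset\mathbb{R}^n$ with $0\notin\overline A$, with $\Phi(x)=x/|x|^2$, the box dimensions, Minkowski contents and Minkowski nondegeneracy of $A$ are defined as those of the bounded set $\Phi(A)$.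 *)

(* Defs.v *)
From HB Require Import structures.
From mathcomp Require Import all_boot all_order all_algebra.
From mathcomp Require Import all_classical all_reals all_analysis.
Set Implicit Arguments. Unset Strict Implicit. Unset Printing Implicit Defensive.
Import Order.TTheory GRing.Theory Num.Theory.
Import numFieldNormedType.Exports.
Local Open Scope classical_set_scope.
Local Open Scope ring_scope.

Section Minkowski.
Context {T : Type} {R : realType} (vol : set T -> \bar R)
        (dist : T -> T -> R) (n : nat).

Definition eps_nbhd (B : set T) (e : R) : set T :=
  [set x | exists2 b, B b & dist x b < e].

Definition mink_ratio (B : set T) (s : R) (e : R) : \bar R :=
  (vol (eps_nbhd B e) * ((e `^ (n%:R - s))^-1)%:E)%E.

Definition upper_mink (B : set T) (s : R) : \bar R :=
  limf_esup (mink_ratio B s) (0%R)^'+.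
Definition lower_mink (B : set T) (s : R) : \bar R :=
  limf_einf (mink_ratio B s) (0%R)^'+.

Definition upper_box_dim (B : set T) : \bar R :=
  ereal_inf [set s%:E | s in [set s : R | 0 <= s /\ upper_mink B s = 0%E]].
Definition lower_box_dim (B : set T) : \bar R :=
  ereal_inf [set s%:E | s in [set s : R | 0 <= s /\ lower_mink B s = 0%E]].

Definition mink_nondegenerate (B : set T) : Prop :=
  exists d : R, 0 <= d /\
    (0 < lower_mink B d)%E /\ (lower_mink B d <= upper_mink B d)%E /\
    (upper_mink B d < +oo)%E.

End Minkowski.

Section Euclid.
Context {R : realType}.

Definition norm2 (p : R * R) : R := Num.sqrt (p.1 ^+ 2 + p.2 ^+ 2).
Definition dist2 (p q : R * R) : R := norm2 (p.1 - q.1, p.2 - q.2).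
Definition dist3 (p q : (R * R) * R) : R :=
  Num.sqrt ((p.1.1 - q.1.1) ^+ 2 + (p.1.2 - q.1.2) ^+ 2 + (p.2 - q.2) ^+ 2).

Definition leb2 : set (R * R) -> \bar R :=
  (@lebesgue_measure R \x @lebesgue_measure R)%E.
Definition leb3 : set ((R * R) * R) -> \bar R :=
  ((@lebesgue_measure R \x @lebesgue_measure R) \x @lebesgue_measure R)%E.

Definition bounded2 (A : set (R * R)) : Prop :=
  exists M : R, forall p, A p -> norm2 p <= M.

Definition Phi2 (p : R * R) : R * R :=
  (p.1 / (norm2 p ^+ 2), p.2 / (norm2 p ^+ 2)).

(* stereographic projection onto the sphere of radius 1/2 centred at
   (0,0,1/2): the second intersection of S with the line through
   N = (0,0,1) and (x,y,0). *)
Definition stereo (p : R * R) : (R * R) * R :=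
  let r2 := p.1 ^+ 2 + p.2 ^+ 2 in
  ((p.1 / (1 + r2), p.2 / (1 + r2)), r2 / (1 + r2)).

Definition upper_box_dim2 := upper_box_dim leb2 dist2 2.
Definition lower_box_dim2 := lower_box_dim leb2 dist2 2.
Definition nondeg2 := mink_nondegenerate leb2 dist2 2.
Definition upper_box_dim3 := upper_box_dim leb3 dist3 3.
Definition lower_box_dim3 := lower_box_dim leb3 dist3 3.
Definition nondeg3 := mink_nondegenerate leb3 dist3 3.

(* for unbounded A with 0 notin closure A: via Phi(A) *)
Definition upper_box_dim_unb (A : set (R * R)) := upper_box_dim2 (Phi2 @` A).
Definition lower_box_dim_unb (A : set (R * R)) := lower_box_dim2 (Phi2 @` A).
Definition nondeg_unb (A : set (R * R)) := nondeg2 (Phi2 @` A).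

End Euclid.

(* Main.v *)
Require Import Defs.
From HB Require Import structures.
From mathcomp Require Import all_boot all_order all_algebra.
From mathcomp Require Import all_classical all_reals all_analysis.
From mathcomp.algebra_tactics Require Import ring lra.
Set Implicit Arguments. Unset Strict Implicit. Unset Printing Implicit Defensive.
Import Order.TTheory GRing.Theory Num.Theory.
Import numFieldNormedType.Exports.
Local Open Scope classical_set_scope.
Local Open Scope ring_scope.

Section Rl.
Variable R : realType.
Implicit Types x y a e : R.

Lemma sq_lt x a : `|x| < a -> x ^+ 2 < a ^+ 2.
Proof. move/ltr_normlP => [h1 h2]; nra. Qed.

Lemma sq_le_abs x a : `|x| <= a -> x ^+ 2 <= a ^+ 2.
Proof. move/ler_normlP => [h1 h2]; nra. Qed.

Lemma sqrt_lt_iff (S e : R) : 0 < e -> (Num.sqrt S < e) = (S < e ^+ 2).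
Proof.
move=> e0; rewrite -{1}(gtr0_norm e0) -sqrtr_sqr ltr_sqrt //.
by rewrite exprn_gt0.
Qed.

Lemma abs_le_sqrt x y : 0 <= y -> `|x| <= Num.sqrt (x ^+ 2 + y).
Proof.
move=> y0; rewrite -sqrtr_sqr; apply: ler_wsqrtr; lra.
Qed.

Lemma minkowski3 (a1 a2 a3 b1 b2 b3 : R) :
  Num.sqrt ((a1 + b1) ^+ 2 + (a2 + b2) ^+ 2 + (a3 + b3) ^+ 2) <=
  Num.sqrt (a1 ^+ 2 + a2 ^+ 2 + a3 ^+ 2) + Num.sqrt (b1 ^+ 2 + b2 ^+ 2 + b3 ^+ 2).
Proof.
set A := a1 ^+ 2 + a2 ^+ 2 + a3 ^+ 2; set B := b1 ^+ 2 + b2 ^+ 2 + b3 ^+ 2.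
have A0 : 0 <= A by rewrite /A; nra.
have B0 : 0 <= B by rewrite /B; nra.
have h : a1 * b1 + a2 * b2 + a3 * b3 <= Num.sqrt A * Num.sqrt B.
  rewrite -sqrtrM //; apply: le_trans (ler_norm _) _; rewrite -sqrtr_sqr.
  apply: ler_wsqrtr; rewrite /A /B.
  have := sqr_ge0 (a1 * b2 - a2 * b1); have := sqr_ge0 (a1 * b3 - a3 * b1);
  have := sqr_ge0 (a2 * b3 - a3 * b2); nra.
have sA := sqrtr_ge0 A; have sB := sqrtr_ge0 B.
rewrite -[X in _ <= X]ger0_norm ?addr_ge0 // -sqrtr_sqr; apply: ler_wsqrtr.
have := sqr_sqrtr A0; have := sqr_sqrtr B0; rewrite /A /B; nra.
Qed.
End Rl.

Section Seqs.
Variable T : Type.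
Definition allS (P : T -> Prop) (S : seq T) : Prop := foldr (fun x A => P x /\ A) True S.
Definition exS (P : T -> Prop) (S : seq T) : Prop := foldr (fun x A => P x \/ A) False S.
Fixpoint pw (r : T -> T -> Prop) (S : seq T) : Prop :=
  if S is x :: S' then allS (r x) S' /\ pw r S' else True.

Lemma allS_impl (P Q : T -> Prop) S : (forall x, P x -> Q x) -> allS P S -> allS Q S.
Proof. by move=> H; elim: S => //= x S IH [/H ? /IH ?]. Qed.

Lemma pw_impl (r r' : T -> T -> Prop) S : (forall x y, r x y -> r' x y) -> pw r S -> pw r' S.
Proof.
move=> H; elim: S => //= x S IH [A B]; split; last exact: IH.
by apply: allS_impl A => y; apply: H.
Qed.

End Seqs.
Section Seqs2.
Variables T U : Type.
Lemma allS_map (f : U -> T) (P : T -> Prop) (S : seq U) : allS (P \o f) S -> allS P (map f S).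
Proof. by elim: S => //= x S IH [? /IH]. Qed.

Lemma pw_map (f : U -> T) (r : T -> T -> Prop) (S : seq U) :
  pw (fun x y => r (f x) (f y)) S -> pw r (map f S).
Proof.
elim: S => //= x S IH [A /IH B]; split => //.
by apply: allS_map; apply: allS_impl A.
Qed.

Lemma exS_map (f : U -> T) (P : T -> Prop) (S : seq U) : exS (P \o f) S -> exS P (map f S).
Proof. by elim: S => //= x S IH [?|/IH ?]; [left|right]. Qed.

End Seqs2.
Section Seqs3.
Variable T : Type.
Lemma allS_forall (P : T -> Prop) S : allS P S -> forall x, exS (eq x) S -> P x.
Proof. by elim: S => //= y S IH [Py /IH H] x [->|/H]. Qed.

Lemma exS_impl (P Q : T -> Prop) S : (forall x, P x -> Q x) -> exS P S -> exS Q S.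
Proof. by move=> H; elim: S => //= x S IH [/H ?|/IH ?]; [left|right]. Qed.
End Seqs3.

Section Maxsep.
Variables (T : Type) (R : realType) (X : set T) (dist : T -> T -> R) (e : R).
Let r := fun x y => e <= dist x y.

Lemma max_sep (N : nat) :
  (forall S, allS X S -> pw r S -> (size S <= N)%N) ->
  exists S, [/\ allS X S, pw r S & forall x, X x -> exS (fun s => dist x s < e) S].
Proof.
move=> HN.
suff: forall k S, (N - size S <= k)%N -> allS X S -> pw r S ->
  exists S, [/\ allS X S, pw r S & forall x, X x -> exS (fun s => dist x s < e) S].
  by move/(_ N [::]); apply => //; rewrite subn0.
elim=> [|k IH] S hk XS rS.
- exists S; split => // x Xx; apply: contrapT => nex.
  have : (size (x :: S) <= N)%N.
    apply: HN => //=; split => //.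
    elim: S {XS rS hk} nex => //= y S IHS nex; split.
      by rewrite /r leNgt; apply/negP => H; apply: nex; left.
    by apply: IHS => H; apply: nex; right.
  move: hk; rewrite leqn0 subn_eq0 => hk H; have := leq_trans H hk; by rewrite /= ltnn.
- have [H|H] := pselect (forall x, X x -> exS (fun s => dist x s < e) S).
    by exists S.
  move/existsNP: H => [x /not_implyP[Xx nex]].
  apply: (IH (x :: S)) => /=.
  + by rewrite /= subnS; move: hk; case: (N - size S)%N.
  + by [].
  + split => //.
    elim: S {XS rS hk IH} nex => //= y S IHS nex; split.
      by rewrite /r leNgt; apply/negP => H; apply: nex; left.
    by apply: IHS => H; apply: nex; right.
Qed.
End Maxsep.

Section Cover.
Local Open Scope ereal_scope.
Context d (T : measurableType d) (R : realType) (mu : {measure set T -> \bar R}).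
Variables (bx : T -> set T) (v : R).
Hypothesis mbx : forall x, measurable (bx x).
Hypothesis mv : forall x, mu (bx x) = v%:E.

Definition Ub (S : seq T) : set T := foldr (fun x A => bx x `|` A) set0 S.

Lemma Ub_meas S : measurable (Ub S).
Proof. by elim: S => //= x S IH; apply: measurableU. Qed.

Lemma Ub_le S : mu (Ub S) <= ((size S)%:R * v)%:E.
Proof.
elim: S => [|x S IH] /=; first by rewrite measure0 mul0r.
apply: le_trans (measureU2 _ (mbx x) (Ub_meas S)) _.
rewrite -[(size S).+1]addn1 natrD mulrDl mul1r EFinD addeC.
by apply: leeD => //; rewrite -(mv x); exact: lexx.
Qed.

Lemma Ub_eq (rr : T -> T -> Prop) S :
  (forall x y, rr x y -> bx x `&` bx y = set0) -> pw rr S ->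
  mu (Ub S) = ((size S)%:R * v)%:E.
Proof.
move=> dj; elim: S => [|x S IH] /=; first by rewrite measure0 mul0r.
move=> [A /IH IH2]; rewrite (measureU mu (mbx x) (Ub_meas S)).
  rewrite -[(size S).+1]addn1 natrD mulrDl mul1r EFinD addeC -IH2; congr (_ + _).
  exact: mv.
clear IH2; elim: S A {IH} => //= [|y S IHS] ; first by rewrite setI0.
by move=> [/dj H /IHS H']; rewrite setIUr H H' setU0.
Qed.
End Cover.

Section UbMem.
Variables (T : Type) (bx : T -> set T).
Lemma Ub_ex S y : foldr (fun x A => bx x `|` A) set0 S y -> exists s, exS (eq s) S /\ bx s y.
Proof.
elim: S => [//|x S IH] /= [h|/IH [s [h1 h2]]]; first by exists x; split => //; left.
by exists s; split => //; right.
Qed.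
Lemma Ub_of_ex S y : exS (fun s => bx s y) S -> foldr (fun x A => bx x `|` A) set0 S y.
Proof. by elim: S => //= x S IH [h|/IH h]; [left|right]. Qed.
End UbMem.

Section PwIn.
Variable T : Type.
Lemma pw_impl_in (P : T -> Prop) (r r' : T -> T -> Prop) S : allS P S ->
  (forall x y, P x -> P y -> r x y -> r' x y) -> pw r S -> pw r' S.
Proof.
move=> PS H; elim: S PS => //= x S IH [Px PS] [A B]; split; last exact: IH.
elim: S PS A {IH B} => //= y S IHS [Py PS] [rxy A]; split; first exact: H.
exact: IHS.
Qed.
End PwIn.

Section L.
Variable R : realType.

Lemma atrP (V : set R) :
  (0%R : R)^'+ V <-> exists2 d : R, 0 < d & forall y, 0 < y -> y < d -> V y.
Proof.
split.
- rewrite /at_right /within /= => /nbhs_ballP[d d0 H]; exists d => // y y0 yd.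
  apply: H => //; rewrite /ball /= sub0r normrN gtr0_norm //.
- move=> [d d0 H]; rewrite /at_right /within /=; apply/nbhs_ballP; exists d => //.
  move=> y /=; rewrite /ball /= sub0r normrN => yd y0; apply: H => //.
  by rewrite gtr0_norm in yd.
Qed.

Lemma atr_scale (V : set R) (a : R) : 0 < a -> (0%R : R)^'+ V ->
  (0%R : R)^'+ [set e | 0 < e /\ V (a * e)%R].
Proof.
move=> a0 /atrP[d d0 H]; apply/atrP; exists (d / a); first by rewrite divr_gt0.
move=> y y0 yd; split => //; apply: H; first by rewrite mulr_gt0.
by rewrite mulrC -ltr_pdivlMr.
Qed.

Local Open Scope ereal_scope.

Lemma le_divK (x y : \bar R) (K : R) : (0 < K)%R -> x <= K%:E * y ->
  x * (K^-1)%:E <= y.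
Proof.
move=> K0 H; have -> : y = (K%:E * y) * (K^-1)%:E.
  by rewrite muleC muleA -EFinM mulVf ?gt_eqF // mul1e.
by apply: lee_wpmul2r => //; rewrite lee_fin invr_ge0 ltW.
Qed.

Lemma le_divK' (x y : \bar R) (K : R) : (0 < K)%R -> x * (K^-1)%:E <= y ->
  x <= K%:E * y.
Proof.
move=> K0 H; have -> : x = K%:E * (x * (K^-1)%:E).
  by rewrite muleCA -EFinM divff ?gt_eqF // mule1.
by apply: lee_wpmul2l => //; rewrite lee_fin ltW.
Qed.

Lemma esup_transfer (f h : R -> \bar R) (K a : R) : (0 < K)%R -> (0 < a)%R ->
  (forall e, (0 < e)%R -> f e <= K%:E * h (a * e)%R) ->
  limf_esup f (0%R : R)^'+ <= K%:E * limf_esup h (0%R : R)^'+.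
Proof.
move=> K0 a0 H; apply: le_divK' => //; rewrite [X in _ <= X]limf_esupE.
apply: le_ereal_inf_tmp => _ [V FV <-]; apply: le_divK => //.
rewrite limf_esupE; apply: le_trans.
  apply: ereal_inf_lbound; exists [set e | (0 < e)%R /\ V (a * e)%R] => //.
  exact: atr_scale.
apply: ge_ereal_sup => _ [e [e0 Ve] <-]; apply: le_trans (H e e0) _.
apply: lee_wpmul2l; first by rewrite lee_fin ltW.
by apply: ereal_sup_ubound; exists (a * e)%R.
Qed.

Lemma einf_transfer (f h : R -> \bar R) (K a : R) : (0 < K)%R -> (0 < a)%R ->
  (forall e, (0 < e)%R -> f e <= K%:E * h (a * e)%R) ->
  limf_einf f (0%R : R)^'+ <= K%:E * limf_einf h (0%R : R)^'+.
Proof.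
move=> K0 a0 H; rewrite [X in X <= _]limf_einfE.
apply: ge_ereal_sup => _ [V FV <-]; apply: le_divK' => //.
rewrite limf_einfE; apply: le_ereal_sup_tmp.
exists (ereal_inf (h @` [set y | (0 < y)%R /\ V (a^-1 * y)%R])).
  by exists [set y | (0 < y)%R /\ V (a^-1 * y)%R] => //; apply: atr_scale; rewrite ?invr_gt0.
apply: le_ereal_inf_tmp => _ [y [y0 Vy] <-]; apply: le_divK => //.
apply: (@le_trans _ _ (f (a^-1 * y)%R)).
  by apply: ereal_inf_lbound; exists (a^-1 * y)%R.
have := H (a^-1 * y)%R; rewrite mulrA divff ?gt_eqF // mul1r; apply.
by rewrite mulr_gt0 ?invr_gt0.
Qed.

Lemma einf_ge0 (f : R -> \bar R) : (forall e, (0 < e)%R -> 0 <= f e) ->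
  0 <= limf_einf f (0%R : R)^'+.
Proof.
move=> H; rewrite limf_einfE; apply: le_ereal_sup_tmp.
exists (ereal_inf (f @` [set y | (0 < y)%R])).
  by exists [set y | (0 < y)%R] => //; apply/atrP; exists 1%R.
by apply: le_ereal_inf_tmp => _ [y y0 <-]; apply: H.
Qed.

Lemma esup_ge0 (f : R -> \bar R) : (forall e, (0 < e)%R -> 0 <= f e) ->
  0 <= limf_esup f (0%R : R)^'+.
Proof.
move=> H; rewrite limf_esupE; apply: le_ereal_inf_tmp => _ [V FV <-].
have [d d0 Hd] := (atrP V).1 FV.
apply: le_trans (H (d/2)%R _) _; first by rewrite divr_gt0.
apply: ereal_sup_ubound; exists (d/2)%R => //; apply: Hd; first by rewrite divr_gt0.
by rewrite ltr_pdivrMr // ltr_pMr // ltr1n.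
Qed.

Lemma einf_le_esup (f : R -> \bar R) :
  limf_einf f (0%R : R)^'+ <= limf_esup f (0%R : R)^'+.
Proof.
rewrite limf_einfE limf_esupE; apply: ge_ereal_sup => _ [V FV <-].
apply: le_ereal_inf_tmp => _ [W FW <-].
have [d d0 Hd] := (atrP V).1 FV; have [d' d0' Hd'] := (atrP W).1 FW.
pose m := (Num.min d d' / 2)%R.
have m0 : (0 < m)%R by rewrite divr_gt0 // lt_min d0 d0'.
have md : (m < Num.min d d')%R by rewrite ltr_pdivrMr // ltr_pMr ?ltr1n // lt_min d0 d0'.
move: md; rewrite lt_min => /andP[md md'].
apply: (@le_trans _ _ (f m)).
  by apply: ereal_inf_lbound; exists m => //; apply: Hd.
by apply: ereal_sup_ubound; exists m => //; apply: Hd'.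
Qed.

End L.

Section G2.
Variable R : realType.

Definition itvc (c a : R) : set R := `]c - a, c + a[%classic.
Definition box2 (c : R * R) (a : R) : set (R * R) := itvc c.1 a `*` itvc c.2 a.

Lemma itvc_meas c a : measurable (itvc c a).
Proof. exact: measurable_itv. Qed.

Lemma itvcE c a x : itvc c a x <-> `|x - c| < a.
Proof.
rewrite /itvc /= in_itv /=; split.
  by move/andP=> [h1 h2]; apply/ltr_normlP; split; lra.
by move/ltr_normlP => [h1 h2]; apply/andP; split; lra.
Qed.

Lemma leb_itvc c a : 0 < a -> (@lebesgue_measure R) (itvc c a) = (2 * a)%:E.
Proof.
move=> a0; rewrite /itvc lebesgue_measure_itv /= ifT; last by rewrite lte_fin; lra.
by rewrite -EFinD; congr (_%:E); lra.
Qed.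

Lemma box2_meas c a : measurable (box2 c a).
Proof. by apply: measurableX; apply: itvc_meas. Qed.

Lemma leb2_box c a : 0 < a -> leb2 (box2 c a) = ((2 * a) ^+ 2)%:E.
Proof.
move=> a0; rewrite /leb2 /box2 product_measure1E; try exact: itvc_meas.
transitivity ((2 * a)%:E * (2 * a)%:E)%E; first by congr (_ * _)%E; apply: leb_itvc.
by rewrite -EFinM expr2.
Qed.

Lemma dist2E (p q : R * R) : dist2 p q = Num.sqrt ((p.1 - q.1) ^+ 2 + (p.2 - q.2) ^+ 2).
Proof. by []. Qed.

Lemma dist2C (p q : R * R) : dist2 p q = dist2 q p.
Proof. by rewrite !dist2E; congr (Num.sqrt _); ring. Qed.

Lemma dist2_c1 (p q : R * R) : `|p.1 - q.1| <= dist2 p q.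
Proof. by rewrite dist2E; apply: abs_le_sqrt; apply: sqr_ge0. Qed.

Lemma dist2_c2 (p q : R * R) : `|p.2 - q.2| <= dist2 p q.
Proof. by rewrite dist2E [X in Num.sqrt X]addrC; apply: abs_le_sqrt; apply: sqr_ge0. Qed.

Lemma dist2_lt (p q : R * R) (a e : R) : 0 < e -> `|p.1 - q.1| < a -> `|p.2 - q.2| < a ->
  2 * a ^+ 2 <= e ^+ 2 -> dist2 p q < e.
Proof.
move=> e0 h1 h2 h; rewrite dist2E sqrt_lt_iff //.
have := sq_lt h1; have := sq_lt h2; lra.
Qed.

Lemma dist2_tri (x y z : R * R) : dist2 x z <= dist2 x y + dist2 y z.
Proof.
have := minkowski3 (x.1 - y.1) (x.2 - y.2) 0 (y.1 - z.1) (y.2 - z.2) 0.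
rewrite !dist2E addr0 expr0n /= !addr0.
have -> : x.1 - y.1 + (y.1 - z.1) = x.1 - z.1 by ring.
by have -> : x.2 - y.2 + (y.2 - z.2) = x.2 - z.2 by ring.
Qed.

Lemma box2E (c : R * R) (a : R) (y : R * R) : box2 c a y <-> `|y.1 - c.1| < a /\ `|y.2 - c.2| < a.
Proof. by rewrite /box2 /=; split => -[/itvcE h1 /itvcE h2]; split => //; apply/itvcE. Qed.

Lemma abs_tri (x y z : R) : `|x - z| <= `|x - y| + `|y - z|.
Proof. have -> : x - z = (x - y) + (y - z) by ring. exact: ler_normD. Qed.

Lemma meas_nbhd2 (X : set (R * R)) e : measurable (eps_nbhd dist2 X e).
Proof.
pose F (q1 q2 r : rat) := [set y | box2 (ratr q1, ratr q2) (ratr r) y /\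
   box2 (ratr q1, ratr q2) (ratr r) `<=` eps_nbhd dist2 X e].
have mF q1 q2 r : measurable (F q1 q2 r).
  have [H|H] := pselect (box2 (ratr q1, ratr q2) (ratr r) `<=` eps_nbhd dist2 X e).
    rewrite (_ : F _ _ _ = box2 (ratr q1, ratr q2) (ratr r)); first exact: box2_meas.
    by apply/seteqP; split => y /=; [case|split].
  rewrite (_ : F _ _ _ = set0) //; apply/seteqP; split => y //=; by case.
rewrite (_ : eps_nbhd _ _ _ = \bigcup_q1 \bigcup_q2 \bigcup_r F q1 q2 r).
  apply: bigcupT_measurable_rat => q1; apply: bigcupT_measurable_rat => q2.
  by apply: bigcupT_measurable_rat => r.
apply/seteqP; split; last by move=> y [q1 _ [q2 _ [r _ [h1 h2]]]]; apply: h2.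
move=> y [x Xx yx].
set d := e - dist2 y x.
have d0 : 0 < d by rewrite /d subr_gt0.
have [r0] := rat_in_itvoo (x:=0) (y:=d/4) ltac:(lra).
rewrite in_itv /= => /andP[r0p r0d].
have [q1] := rat_in_itvoo (x:=y.1 - ratr r0) (y:=y.1 + ratr r0) ltac:(lra).
rewrite in_itv /= => /andP[h11 h12].
have [q2] := rat_in_itvoo (x:=y.2 - ratr r0) (y:=y.2 + ratr r0) ltac:(lra).
rewrite in_itv /= => /andP[h21 h22].
exists q1 => //; exists q2 => //; exists r0 => //; split.
  by apply/box2E => /=; split; apply/ltr_normlP; split; lra.
move=> z /box2E /= [hz1 hz2]; exists x => //.
apply: le_lt_trans (dist2_tri z y x) _.
have : dist2 z y < d.
  apply: (@dist2_lt _ _ (d/2)) => //.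
  - by move/ltr_normlP: hz1 => [? ?]; apply/ltr_normlP; split; lra.
  - by move/ltr_normlP: hz2 => [? ?]; apply/ltr_normlP; split; lra.
  - nra.
rewrite /d; lra.
Qed.


Lemma low2 (X : set (R * R)) (S : seq (R * R)) (e : R) : 0 < e -> allS X S ->
  pw (fun x y => e <= dist2 x y) S ->
  (((size S)%:R * (e / 2) ^+ 2)%:E <= leb2 (eps_nbhd dist2 X (e / 2)))%E.
Proof.
move=> e0 XS pS.
have mv c : leb2 (box2 c (e / 4)) = ((e / 2) ^+ 2)%:E.
  by rewrite leb2_box; [congr (EFin (_ ^+ 2)); lra | lra].
have dj (x y : R * R) : e <= dist2 x y -> box2 x (e / 4) `&` box2 y (e / 4) = set0.
  move=> h; apply/seteqP; split => // z [/box2E [h1 h2] /box2E [h3 h4]].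
  move: h; rewrite leNgt => /negP; apply; apply: (@dist2_lt _ _ (e / 2)) => //.
  - move/ltr_normlP: h1 => [? ?]; move/ltr_normlP: h3 => [? ?].
    by apply/ltr_normlP; split; lra.
  - move/ltr_normlP: h2 => [? ?]; move/ltr_normlP: h4 => [? ?].
    by apply/ltr_normlP; split; lra.
  - nra.
rewrite -(@Ub_eq _ _ _ leb2 (fun c => box2 c (e / 4)) _ (fun c => box2_meas c (e / 4)) mv _ S dj pS).
apply: le_measure; rewrite ?inE; [exact: (Ub_meas (fun c => box2_meas c (e / 4)))|exact: meas_nbhd2|].
move=> z hz0; have [s [hs hz]] := @Ub_ex _ (fun c => box2 c (e / 4)) S z hz0.
exists s; first exact: (allS_forall XS hs).
move/box2E: hz => [h1 h2]; apply: (@dist2_lt _ _ (e / 4)) => //.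
- by rewrite divr_gt0.
- nra.
Qed.

Lemma up2 (X : set (R * R)) (S : seq (R * R)) (e : R) : 0 < e ->
  (forall x, X x -> exS (fun s => dist2 x s < e) S) ->
  (leb2 (eps_nbhd dist2 X e) <= ((size S)%:R * (4 * e) ^+ 2)%:E)%E.
Proof.
move=> e0 HX.
have mv c : leb2 (box2 c (2 * e)) = ((4 * e) ^+ 2)%:E.
  by rewrite leb2_box; [congr (EFin (_ ^+ 2)); lra | lra].
apply: le_trans (@Ub_le _ _ _ leb2 (fun c => box2 c (2 * e)) _ (fun c => box2_meas c (2 * e)) mv S).
apply: le_measure; rewrite ?inE; [exact: meas_nbhd2|exact: (Ub_meas (fun c => box2_meas c (2 * e)))|].
move=> y [x Xx yx]; apply: (@Ub_of_ex _ (fun c => box2 c (2 * e))); apply: exS_impl (HX x Xx) => s xs.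
apply/box2E; have := dist2_c1 y x; have := dist2_c2 y x.
have := dist2_c1 x s; have := dist2_c2 x s.
move=> /ler_normlP [? ?] /ler_normlP [? ?] /ler_normlP [? ?] /ler_normlP [? ?].
by split; apply/ltr_normlP; split; lra.
Qed.

Lemma bnd2 (X : set (R * R)) (M e : R) : 0 < e ->
  (forall p, X p -> `|p.1| <= M /\ `|p.2| <= M) ->
  exists N : nat, forall S, allS X S -> pw (fun x y => e <= dist2 x y) S -> (size S <= N)%N.
Proof.
move=> e0 HM.
have M0 : forall p, X p -> 0 <= M.
  by move=> p /HM [h _]; apply: le_trans h.
pose V := (2 * (M + e)) ^+ 2 / (e / 2) ^+ 2.
exists (Num.bound V) => S XS pS.
case: S XS pS => [//|s0 S'] XS pS.
have M0' : 0 <= M by apply: (M0 s0); case: XS.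
have := low2 e0 XS pS.
have sub : eps_nbhd dist2 X (e / 2) `<=` box2 (0, 0) (M + e).
  move=> y [x Xx yx]; have [h1 h2] := HM x Xx; apply/box2E => /=; rewrite !subr0.
  have := dist2_c1 y x; have := dist2_c2 y x.
  move=> /ler_normlP [? ?] /ler_normlP [? ?]; move/ler_normlP: h1 => [? ?].
  by move/ler_normlP: h2 => [? ?]; split; apply/ltr_normlP; split; lra.
have := le_measure leb2 (mem_set (meas_nbhd2 X (e / 2))) (mem_set (box2_meas (0, 0) (M + e))) sub.
move=> h1 h2.
have h1' : (leb2 (eps_nbhd dist2 X (e / 2)) <= leb2 (box2 (0%R, 0%R) (M + e)))%E := h1.
rewrite leb2_box in h1'; last by lra.
have := le_trans h2 h1'; rewrite lee_fin => h.
have V0 : 0 <= V by rewrite /V divr_ge0 // sqr_ge0.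
have := archi_boundP V0; rewrite -/(size (s0 :: S')) => hb.
have : (size (s0 :: S'))%:R < (Num.bound V)%:R :> R.
  apply: le_lt_trans hb; rewrite /V ler_pdivlMr ?exprn_gt0 ?divr_gt0 //.
rewrite ltr_nat => /ltnW //.
Qed.

End G2.

Section G3.
Variable R : realType.
Notation P3 := ((R * R) * R)%type.

Definition box3 (c : P3) (a : R) : set P3 := box2 c.1 a `*` itvc c.2 a.

Lemma box3_meas (c : P3) a : measurable (box3 c a).
Proof. by apply: measurableX; [apply: box2_meas|apply: itvc_meas]. Qed.

Lemma leb3_box (c : P3) a : 0 < a -> leb3 (box3 c a) = ((2 * a) ^+ 3)%:E.
Proof.
move=> a0; rewrite /leb3 /box3 product_measure1E; [|exact: box2_meas|exact: itvc_meas].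
transitivity (((2 * a) ^+ 2)%:E * (2 * a)%:E)%E.
  by congr (_ * _)%E; [apply: leb2_box|apply: leb_itvc].
by rewrite -EFinM -exprSr.
Qed.

Lemma dist3E (p q : P3) : dist3 p q =
  Num.sqrt ((p.1.1 - q.1.1) ^+ 2 + (p.1.2 - q.1.2) ^+ 2 + (p.2 - q.2) ^+ 2).
Proof. by []. Qed.

Lemma dist3_c1 (p q : P3) : `|p.1.1 - q.1.1| <= dist3 p q.
Proof.
rewrite dist3E (_ : _ + _ + _ = (p.1.1 - q.1.1) ^+ 2 + ((p.1.2 - q.1.2) ^+ 2 + (p.2 - q.2) ^+ 2)); last by ring.
by apply: abs_le_sqrt; rewrite addr_ge0 ?sqr_ge0.
Qed.

Lemma dist3_c2 (p q : P3) : `|p.1.2 - q.1.2| <= dist3 p q.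
Proof.
rewrite dist3E (_ : _ + _ + _ = (p.1.2 - q.1.2) ^+ 2 + ((p.1.1 - q.1.1) ^+ 2 + (p.2 - q.2) ^+ 2)); last by ring.
by apply: abs_le_sqrt; rewrite addr_ge0 ?sqr_ge0.
Qed.

Lemma dist3_c3 (p q : P3) : `|p.2 - q.2| <= dist3 p q.
Proof.
rewrite dist3E (_ : _ + _ + _ = (p.2 - q.2) ^+ 2 + ((p.1.1 - q.1.1) ^+ 2 + (p.1.2 - q.1.2) ^+ 2)); last by ring.
by apply: abs_le_sqrt; rewrite addr_ge0 ?sqr_ge0.
Qed.

Lemma dist3_lt (p q : P3) (a e : R) : 0 < e -> `|p.1.1 - q.1.1| < a ->
  `|p.1.2 - q.1.2| < a -> `|p.2 - q.2| < a ->
  3 * a ^+ 2 <= e ^+ 2 -> dist3 p q < e.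
Proof.
move=> e0 h1 h2 h3 h; rewrite dist3E sqrt_lt_iff //.
have := sq_lt h1; have := sq_lt h2; have := sq_lt h3; lra.
Qed.

Lemma dist3_tri (x y z : P3) : dist3 x z <= dist3 x y + dist3 y z.
Proof.
have := minkowski3 (x.1.1 - y.1.1) (x.1.2 - y.1.2) (x.2 - y.2)
  (y.1.1 - z.1.1) (y.1.2 - z.1.2) (y.2 - z.2).
rewrite !dist3E.
have -> : x.1.1 - y.1.1 + (y.1.1 - z.1.1) = x.1.1 - z.1.1 by ring.
have -> : x.1.2 - y.1.2 + (y.1.2 - z.1.2) = x.1.2 - z.1.2 by ring.
by have -> : x.2 - y.2 + (y.2 - z.2) = x.2 - z.2 by ring.
Qed.

Lemma box3E (c : P3) (a : R) (y : P3) : box3 c a y <->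
  [/\ `|y.1.1 - c.1.1| < a, `|y.1.2 - c.1.2| < a & `|y.2 - c.2| < a].
Proof.
rewrite /box3 /=; split.
  by move=> [/box2E [h1 h2] /itvcE h3].
by move=> [h1 h2 h3]; split; [apply/box2E|apply/itvcE].
Qed.

Lemma meas_nbhd3 (X : set P3) e : measurable (eps_nbhd dist3 X e).
Proof.
pose F (q1 q2 q3 r : rat) := [set y | box3 ((ratr q1, ratr q2), ratr q3) (ratr r) y /\
   box3 ((ratr q1, ratr q2), ratr q3) (ratr r) `<=` eps_nbhd dist3 X e].
have mF q1 q2 q3 r : measurable (F q1 q2 q3 r).
  have [H|H] := pselect (box3 ((ratr q1, ratr q2), ratr q3) (ratr r) `<=` eps_nbhd dist3 X e).
    rewrite (_ : F _ _ _ _ = box3 ((ratr q1, ratr q2), ratr q3) (ratr r)); first exact: box3_meas.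
    by apply/seteqP; split => y /=; [case|split].
  rewrite (_ : F _ _ _ _ = set0) //; apply/seteqP; split => y //=; by case.
rewrite (_ : eps_nbhd _ _ _ = \bigcup_q1 \bigcup_q2 \bigcup_q3 \bigcup_r F q1 q2 q3 r).
  apply: bigcupT_measurable_rat => q1; apply: bigcupT_measurable_rat => q2.
  apply: bigcupT_measurable_rat => q3.
  by apply: bigcupT_measurable_rat => r.
apply/seteqP; split; last by move=> y [q1 _ [q2 _ [q3 _ [r _ [h1 h2]]]]]; apply: h2.
move=> y [x Xx yx].
set d := e - dist3 y x.
have d0 : 0 < d by rewrite /d subr_gt0.
have [r0] := rat_in_itvoo (x:=0) (y:=d/4) ltac:(lra).
rewrite in_itv /= => /andP[r0p r0d].
have [q1] := rat_in_itvoo (x:=y.1.1 - ratr r0) (y:=y.1.1 + ratr r0) ltac:(lra).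
rewrite in_itv /= => /andP[h11 h12].
have [q2] := rat_in_itvoo (x:=y.1.2 - ratr r0) (y:=y.1.2 + ratr r0) ltac:(lra).
rewrite in_itv /= => /andP[h21 h22].
have [q3] := rat_in_itvoo (x:=y.2 - ratr r0) (y:=y.2 + ratr r0) ltac:(lra).
rewrite in_itv /= => /andP[h31 h32].
exists q1 => //; exists q2 => //; exists q3 => //; exists r0 => //; split.
  by apply/box3E => /=; split; apply/ltr_normlP; split; lra.
move=> z /box3E /= [hz1 hz2 hz3]; exists x => //.
apply: le_lt_trans (dist3_tri z y x) _.
have : dist3 z y < d.
  apply: (@dist3_lt _ _ (d/2)) => //.
  - by move/ltr_normlP: hz1 => [? ?]; apply/ltr_normlP; split; lra.
  - by move/ltr_normlP: hz2 => [? ?]; apply/ltr_normlP; split; lra.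
  - by move/ltr_normlP: hz3 => [? ?]; apply/ltr_normlP; split; lra.
  - nra.
rewrite /d; lra.
Qed.

Lemma low3 (X : set P3) (S : seq P3) (e : R) : 0 < e -> allS X S ->
  pw (fun x y => e <= dist3 x y) S ->
  (((size S)%:R * (e / 2) ^+ 3)%:E <= leb3 (eps_nbhd dist3 X (e / 2)))%E.
Proof.
move=> e0 XS pS.
have mv c : leb3 (box3 c (e / 4)) = ((e / 2) ^+ 3)%:E.
  by rewrite leb3_box; [congr (EFin (_ ^+ 3)); lra | lra].
have dj (x y : P3) : e <= dist3 x y -> box3 x (e / 4) `&` box3 y (e / 4) = set0.
  move=> h; apply/seteqP; split => // z [/box3E [h1 h2 h5] /box3E [h3 h4 h6]].
  move: h; rewrite leNgt => /negP; apply; apply: (@dist3_lt _ _ (e / 2)) => //.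
  - move/ltr_normlP: h1 => [? ?]; move/ltr_normlP: h3 => [? ?].
    by apply/ltr_normlP; split; lra.
  - move/ltr_normlP: h2 => [? ?]; move/ltr_normlP: h4 => [? ?].
    by apply/ltr_normlP; split; lra.
  - move/ltr_normlP: h5 => [? ?]; move/ltr_normlP: h6 => [? ?].
    by apply/ltr_normlP; split; lra.
  - nra.
rewrite -(@Ub_eq _ _ _ leb3 (fun c => box3 c (e / 4)) _ (fun c => box3_meas c (e / 4)) mv _ S dj pS).
apply: le_measure; rewrite ?inE; [exact: (Ub_meas (fun c => box3_meas c (e / 4)))|exact: meas_nbhd3|].
move=> z hz0; have [s [hs hz]] := @Ub_ex _ (fun c => box3 c (e / 4)) S z hz0.
exists s; first exact: (allS_forall XS hs).
move/box3E: hz => [h1 h2 h3]; apply: (@dist3_lt _ _ (e / 4)) => //.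
- by rewrite divr_gt0.
- nra.
Qed.

Lemma up3 (X : set P3) (S : seq P3) (e : R) : 0 < e ->
  (forall x, X x -> exS (fun s => dist3 x s < e) S) ->
  (leb3 (eps_nbhd dist3 X e) <= ((size S)%:R * (4 * e) ^+ 3)%:E)%E.
Proof.
move=> e0 HX.
have mv c : leb3 (box3 c (2 * e)) = ((4 * e) ^+ 3)%:E.
  by rewrite leb3_box; [congr (EFin (_ ^+ 3)); lra | lra].
apply: le_trans (@Ub_le _ _ _ leb3 (fun c => box3 c (2 * e)) _ (fun c => box3_meas c (2 * e)) mv S).
apply: le_measure; rewrite ?inE; [exact: meas_nbhd3|exact: (Ub_meas (fun c => box3_meas c (2 * e)))|].
move=> y [x Xx yx]; apply: (@Ub_of_ex _ (fun c => box3 c (2 * e))); apply: exS_impl (HX x Xx) => s xs.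
apply/box3E; have := dist3_c1 y x; have := dist3_c2 y x; have := dist3_c3 y x.
have := dist3_c1 x s; have := dist3_c2 x s; have := dist3_c3 x s.
move=> /ler_normlP [? ?] /ler_normlP [? ?] /ler_normlP [? ?] /ler_normlP [? ?].
move=> /ler_normlP [? ?] /ler_normlP [? ?].
by split; apply/ltr_normlP; split; lra.
Qed.

Lemma bnd3 (X : set P3) (M e : R) : 0 < e ->
  (forall p, X p -> [/\ `|p.1.1| <= M, `|p.1.2| <= M & `|p.2| <= M]) ->
  exists N : nat, forall S, allS X S -> pw (fun x y => e <= dist3 x y) S -> (size S <= N)%N.
Proof.
move=> e0 HM.
pose V := (2 * (M + e)) ^+ 3 / (e / 2) ^+ 3.
exists (Num.bound V) => S XS pS.
case: S XS pS => [//|s0 S'] XS pS.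
have M0' : 0 <= M by have [h _ _] := HM s0 (proj1 XS); apply: le_trans h.
have := low3 e0 XS pS.
have sub : eps_nbhd dist3 X (e / 2) `<=` box3 ((0, 0), 0) (M + e).
  move=> y [x Xx yx]; have [h1 h2 h3] := HM x Xx; apply/box3E => /=; rewrite !subr0.
  have := dist3_c1 y x; have := dist3_c2 y x; have := dist3_c3 y x.
  move=> /ler_normlP [? ?] /ler_normlP [? ?] /ler_normlP [? ?]; move/ler_normlP: h1 => [? ?].
  move/ler_normlP: h3 => [? ?].
  by move/ler_normlP: h2 => [? ?]; split; apply/ltr_normlP; split; lra.
have := le_measure leb3 (mem_set (meas_nbhd3 X (e / 2))) (mem_set (box3_meas ((0, 0), 0) (M + e))) sub.
move=> h1 h2.
have h1' : (leb3 (eps_nbhd dist3 X (e / 2)) <= leb3 (box3 ((0%R, 0%R), 0%R) (M + e)))%E := h1.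
rewrite leb3_box in h1'; last by lra.
have := le_trans h2 h1'; rewrite lee_fin => h.
have V0 : 0 <= V by rewrite /V divr_ge0 // exprn_ge0 //; lra.
have := archi_boundP V0; rewrite -/(size (s0 :: S')) => hb.
have : (size (s0 :: S'))%:R < (Num.bound V)%:R :> R.
  apply: le_lt_trans hb; rewrite /V ler_pdivlMr ?exprn_gt0 ?divr_gt0 //.
rewrite ltr_nat => /ltnW //.
Qed.

End G3.

Section S.
Variable R : realType.

Definition rr (q : R * R) : R := q.1 ^+ 2 + q.2 ^+ 2.
Definition gg (q : R * R) : (R * R) * R :=
  ((q.1 / (1 + rr q), q.2 / (1 + rr q)), 1 / (1 + rr q)).

Lemma rr_ge0 q : 0 <= rr q.
Proof. by rewrite /rr addr_ge0 ?sqr_ge0. Qed.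

Lemma gg_sq (q q' : R * R) :
  dist3 (gg q) (gg q') ^+ 2 * ((1 + rr q) * (1 + rr q')) = dist2 q q' ^+ 2.
Proof.
have h1 : 1 + rr q != 0 by rewrite gt_eqF // ltr_pwDl // rr_ge0.
have h2 : 1 + rr q' != 0 by rewrite gt_eqF // ltr_pwDl // rr_ge0.
rewrite dist3E dist2E !sqr_sqrtr; last 2 first.
- by rewrite addr_ge0 ?sqr_ge0.
- by rewrite !addr_ge0 ?sqr_ge0.
move: h1 h2; rewrite /gg /rr /=; move=> h1 h2; field.
by rewrite h1 h2.
Qed.

Lemma gg_contr q q' : dist3 (gg q) (gg q') <= dist2 q q'.
Proof.
have := gg_sq q q'.
have u1 : 1 <= (1 + rr q) * (1 + rr q').
  have := rr_ge0 q; have := rr_ge0 q'; nra.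
have d30 : 0 <= dist3 (gg q) (gg q') by apply: sqrtr_ge0.
have d20 : 0 <= dist2 q q' by apply: sqrtr_ge0.
move=> h; rewrite -(ler_pXn2r (n:=2)) // ?nnegrE //.
rewrite -h; have := sqr_ge0 (dist3 (gg q) (gg q')); nra.
Qed.

Lemma gg_exp (M : R) q q' : `|q.1| <= M -> `|q.2| <= M -> `|q'.1| <= M -> `|q'.2| <= M ->
  (1 + 2 * M ^+ 2)^-1 * dist2 q q' <= dist3 (gg q) (gg q').
Proof.
move=> h1 h2 h3 h4.
have M0 : 0 <= M by apply: le_trans h1.
have c0 : 0 < 1 + 2 * M ^+ 2 by have := sqr_ge0 M; lra.
have d30 : 0 <= dist3 (gg q) (gg q') by apply: sqrtr_ge0.
have d20 : 0 <= dist2 q q' by apply: sqrtr_ge0.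
rewrite mulrC ler_pdivrMr //.
have u1 : rr q <= 2 * M ^+ 2.
  by have := sq_le_abs h1; have := sq_le_abs h2; rewrite /rr; lra.
have u2 : rr q' <= 2 * M ^+ 2.
  by have := sq_le_abs h3; have := sq_le_abs h4; rewrite /rr; lra.
have := gg_sq q q'.
rewrite -(ler_pXn2r (n:=2)) // ?nnegrE //; last by rewrite mulr_ge0 // ltW.
move=> <-; rewrite [X in _ <= X]exprMn.
apply: ler_wpM2l; first by apply: sqr_ge0.
have := rr_ge0 q; have := rr_ge0 q'.
move=> hb ha.
have e1 : 0 <= (2 * M ^+ 2 - rr q) * (1 + rr q') by rewrite mulr_ge0 //; lra.
have e2 : 0 <= (2 * M ^+ 2 - rr q') * (1 + 2 * M ^+ 2) by rewrite mulr_ge0 //; lra.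
nra.
Qed.

Lemma norm2_sq (p : R * R) : norm2 p ^+ 2 = rr p.
Proof. by rewrite /norm2 sqr_sqrtr // rr_ge0. Qed.

Lemma stereo_Phi (p : R * R) : rr p != 0 -> stereo p = gg (Phi2 p).
Proof.
move=> h; rewrite /stereo /gg /Phi2 !norm2_sq.
case: p h => x y; rewrite /rr /= => h.
have h' : 1 + (x ^+ 2 + y ^+ 2) != 0.
  by rewrite gt_eqF // ltr_pwDl // addr_ge0 ?sqr_ge0.
have n0 : 0 < x ^+ 2 + y ^+ 2.
  by rewrite lt_neqAle eq_sym h addr_ge0 ?sqr_ge0.
have h2 : (x ^+ 2 + y ^+ 2) ^+ 2 + (x ^+ 2 + y ^+ 2) != 0.
  by rewrite gt_eqF // addr_gt0 // exprn_gt0.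
by congr (_, _); first congr (_, _); field; rewrite h h' h2.
Qed.

Lemma Phi_bound (p : R * R) (d : R) : 0 < d -> d ^+ 2 <= rr p ->
  `|(Phi2 p).1| <= d^-1 /\ `|(Phi2 p).2| <= d^-1.
Proof.
move=> d0 h; have n0 : 0 < rr p by apply: lt_le_trans h; rewrite exprn_gt0.
rewrite /Phi2 /= !norm2_sq !normrM (gtr0_norm (x := (rr p)^-1)) ?invr_gt0 //.
have k (x : R) : x ^+ 2 <= rr p -> `|x| * (rr p)^-1 <= d^-1.
  move=> hx; rewrite ler_pdivrMr // -(ler_pM2l d0) mulrA divff ?gt_eqF // mul1r.
  have : `|x| ^+ 2 <= rr p by rewrite real_normK // num_real.
  have := normr_ge0 x; set y := `|x|; nra.
by split; apply: k; rewrite /rr; have := sqr_ge0 p.1; have := sqr_ge0 p.2; lra.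
Qed.

End S.

Section M.
Variable R : realType.

Lemma away (A : set (R * R)) : ~ closure A (0, 0) ->
  exists2 d : R, 0 < d & forall p, A p -> d ^+ 2 <= rr p.
Proof.
move=> /existsNP [B /not_implyP [nB nAB]].
have [d /= d0 H] := (nbhs_ballP _ _).1 nB.
exists d => // p Ap; rewrite leNgt; apply/negP => hp; apply: nAB.
exists p; split => //; apply: H.
have h1 : p.1 ^+ 2 < d ^+ 2 by have := sqr_ge0 p.2; rewrite /rr in hp; lra.
have h2 : p.2 ^+ 2 < d ^+ 2 by have := sqr_ge0 p.1; rewrite /rr in hp; lra.
have k (x : R) : x ^+ 2 < d ^+ 2 -> `|x| < d.
  rewrite -[x ^+ 2]real_normK ?num_real //; move: (normr_ge0 x); move: `|x| => y y0 hx.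
  rewrite ltNge; apply/negP => hy.
  have : d * d <= y * y by apply: ler_pM => //; apply: ltW.
  rewrite -!expr2; lra.
split; rewrite /ball /= sub0r normrN; exact: k.
Qed.

Lemma combine (L3 L2 : \bar R) (N A Bv c0 w3 w2 K : R) :
  0 <= N -> 0 <= w3 -> 0 <= w2 -> A = c0 * Bv -> 0 <= c0 -> c0 * w3 = K * w2 ->
  (L3 <= (N * A)%:E)%E -> ((N * Bv)%:E <= L2)%E ->
  (L3 * w3%:E <= K%:E * (L2 * w2%:E))%E.
Proof.
move=> N0 w30 w20 hA c00 hK h3 h2.
apply: le_trans (lee_wpmul2r _ h3) _; first by rewrite lee_fin.
rewrite -EFinM.
have -> : N * A * w3 = (K * w2) * (N * Bv) by rewrite hA -hK; ring.
rewrite EFinM; apply: le_trans (lee_wpmul2l _ h2) _.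
  by rewrite lee_fin -hK mulr_ge0.
by rewrite EFinM muleAC muleA.
Qed.

Lemma ratio_ge0 (dd : measure_display) (T : measurableType dd) (vol : {measure set T -> \bar R}) (dist : T -> T -> R) n (B : set T) s e :
  (0 <= mink_ratio vol dist n B s e)%E.
Proof.
by rewrite /mink_ratio mule_ge0 // lee_fin invr_ge0 powR_ge0.
Qed.


Lemma pow3 (e s : R) : 0 < e -> e `^ (3%:R - s) = e * e `^ (2%:R - s).
Proof.
move=> e0; rewrite (_ : 3%:R - s = 1 + (2%:R - s)); last by lra.
rewrite powRD ?powRr1 ?(ltW e0) //; by apply/implyP => _; rewrite gt_eqF.
Qed.

Variables (B : set (R * R)) (M : R).
Hypothesis hB : forall p, B p -> `|p.1| <= M /\ `|p.2| <= M.

Definition K1 (s : R) : R := 256 * (2^-1) `^ (2%:R - s).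

Lemma T1 (s e : R) : 0 < e ->
  (mink_ratio leb3 dist3 3%N ((@gg R) @` B) s e <= (K1 s)%:E * mink_ratio leb2 dist2 2%N B s (2^-1 * e))%E.
Proof.
move=> e0.
have [N HN] := bnd2 e0 hB.
have [S [BS pS cov]] := @max_sep _ _ B (fun x y => dist3 (@gg R x) (@gg R y)) e N
  (fun S BS pS => HN S BS (pw_impl (fun x y h => le_trans h (gg_contr x y)) pS)).
have pS2 : pw (fun x y => e <= dist2 x y) S := pw_impl (fun x y h => le_trans h (gg_contr x y)) pS.
have up : (leb3 (eps_nbhd dist3 ((@gg R) @` B) e) <= ((size S)%:R * (4 * e) ^+ 3)%:E)%E.
  rewrite -(size_map (@gg R)); apply: up3 => // _ [x Bx <-].
  exact: (@exS_map _ _ (@gg R) (fun t => dist3 (@gg R x) t < e) S (cov x Bx)).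
have lo := low2 e0 BS pS2.
rewrite /mink_ratio.
have -> : 2^-1 * e = e / 2 by rewrite mulrC.
apply: (@combine _ _ (size S)%:R ((4 * e) ^+ 3) ((e / 2) ^+ 2) (256 * e)) => //.
- by rewrite invr_ge0 powR_ge0.
- by rewrite invr_ge0 powR_ge0.
- by field.
- by rewrite mulr_ge0 // ltW.
rewrite /K1 pow3 //.
have -> : (e / 2) `^ (2%:R - s) = e `^ (2%:R - s) * (2^-1) `^ (2%:R - s).
  by rewrite powRM // ?(ltW e0) // invr_ge0.
have h1 : e `^ (2%:R - s) != 0 by rewrite gt_eqF // powR_gt0.
have h2 : (2^-1 : R) `^ (2%:R - s) != 0 by rewrite gt_eqF // powR_gt0 // invr_gt0.
by field; rewrite h1 h2 gt_eqF.
Qed.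


Definition cc : R := (1 + 2 * M ^+ 2)^-1.
Definition K2 (s : R) : R := 128 * (cc / 2) `^ (3%:R - s) / cc ^+ 3.

Lemma cc_gt0 : 0 < cc.
Proof. by rewrite /cc invr_gt0; have := sqr_ge0 M; lra. Qed.

Lemma T2 (s e : R) : 0 < e ->
  (mink_ratio leb2 dist2 2%N B s e <= (K2 s)%:E * mink_ratio leb3 dist3 3%N ((@gg R) @` B) s (cc / 2 * e))%E.
Proof.
move=> e0; have c0 := cc_gt0.
have [N HN] := bnd2 e0 hB.
have [S [BS pS cov]] := @max_sep _ _ B dist2 e N HN.
have up := up2 e0 cov.
have ce0 : 0 < cc * e by rewrite mulr_gt0.
have pS3 : pw (fun x y => cc * e <= dist3 x y) (map (@gg R) S).
  apply: pw_map; apply: (pw_impl_in BS _ pS) => x y Bx By h.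
  have [h1 h2] := hB Bx; have [h3 h4] := hB By.
  apply: le_trans (gg_exp h1 h2 h3 h4); rewrite -/cc.
  by rewrite ler_pM2l.
have BS3 : allS ((@gg R) @` B) (map (@gg R) S).
  by apply: allS_map; apply: allS_impl BS => x Bx; exists x.
have lo := low3 ce0 BS3 pS3; rewrite size_map in lo.
rewrite /mink_ratio.
have -> : cc / 2 * e = cc * e / 2 by rewrite mulrAC.
apply: (@combine _ _ (size S)%:R ((4 * e) ^+ 2) ((cc * e / 2) ^+ 3) (128 / (cc ^+ 3 * e))) => //.
- by rewrite invr_ge0 powR_ge0.
- by rewrite invr_ge0 powR_ge0.
- by field; rewrite gt_eqF // gt_eqF.
- by rewrite divr_ge0 // ltW // mulr_gt0 // exprn_gt0.
have E : (cc * e / 2) `^ (3%:R - s) = (cc / 2) `^ (3%:R - s) * (e * e `^ (2%:R - s)).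
  rewrite -pow3 // -powRM ?(ltW e0) ?divr_ge0 ?(ltW c0) //; congr (_ `^ _).
  by rewrite mulrAC.
rewrite /K2 E.
have h1 : e `^ (2%:R - s) != 0 by rewrite gt_eqF // powR_gt0.
have h2 : (cc / 2) `^ (3%:R - s) != 0 by rewrite gt_eqF // powR_gt0 // divr_gt0.
by field; rewrite h1 h2 !gt_eqF.
Qed.

End M.

Theorem proposition2p21 (R : realType) (A : set (R * R)) :
  ~ bounded2 A -> ~ closure A (0, 0) ->
  upper_box_dim_unb A = upper_box_dim3 (stereo @` A) /\
  lower_box_dim_unb A = lower_box_dim3 (stereo @` A) /\
  (nondeg_unb A -> nondeg3 (stereo @` A)).
Proof.
move=> _ nc; have [d d0 hd] := away nc.
have hB : forall p, (Phi2 @` A) p -> `|p.1| <= d^-1 /\ `|p.2| <= d^-1.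
  by move=> _ [p Ap <-]; exact: Phi_bound d0 (hd p Ap).
have EgB : stereo @` A = (@gg R) @` (Phi2 @` A).
  apply/seteqP; split => y.
    move=> [p Ap <-]; exists (Phi2 p); first by exists p.
    apply/esym/stereo_Phi; rewrite gt_eqF //; apply: lt_le_trans (hd p Ap).
    by rewrite exprn_gt0.
  move=> [_ [p Ap <-] <-]; exists p => //; apply: stereo_Phi.
  rewrite gt_eqF //; apply: lt_le_trans (hd p Ap); by rewrite exprn_gt0.
rewrite EgB; set B := Phi2 @` A.
have K1_gt0 (s : R) : 0 < K1 s by rewrite /K1 mulr_gt0 // powR_gt0 // invr_gt0.
have K2_gt0 s : 0 < K2 d^-1 s.
  by rewrite /K2 divr_gt0 ?mulr_gt0 ?powR_gt0 ?divr_gt0 ?exprn_gt0 // cc_gt0.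
have r2 s e : (0 < e)%R -> (0 <= mink_ratio leb2 dist2 2%N B s e)%E.
  by move=> _; apply: ratio_ge0.
have i2 : (0 < (2^-1 : R)) by rewrite invr_gt0.
have ic : 0 < cc d^-1 / 2 by rewrite divr_gt0 // cc_gt0.
have U1 (s : R) := esup_transfer (K1_gt0 s) i2 (fun e e0 => T1 hB s e0).
have U2 (s : R) := esup_transfer (K2_gt0 s) ic (fun e e0 => T2 hB s e0).
have L1 (s : R) := einf_transfer (K1_gt0 s) i2 (fun e e0 => T1 hB s e0).
have L2 (s : R) := einf_transfer (K2_gt0 s) ic (fun e e0 => T2 hB s e0).
have g2 (s : R) : forall e, (0 < e)%R -> (0 <= mink_ratio leb2 dist2 2%N B s e)%E.
  by move=> e _; apply: ratio_ge0.
have g3 (s : R) : forall e, (0 < e)%R -> (0 <= mink_ratio leb3 dist3 3%N ((@gg R) @` B) s e)%E.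
  by move=> e _; apply: ratio_ge0.
have zero (x y : \bar R) (K : R) : (0 <= x)%E -> (x <= K%:E * y)%E -> y = 0%E -> x = 0%E.
  move=> x0 h y0; apply/eqP; rewrite eq_le x0 andbT; move: h; by rewrite y0 mule0.
have EU : [set s | 0 <= s /\ upper_mink leb2 dist2 2 B s = 0%E] =
          [set s | 0 <= s /\ upper_mink leb3 dist3 3 ((@gg R) @` B) s = 0%E].
  apply/seteqP; split => s [s0 h]; (split; first exact: s0).
  + exact: zero (esup_ge0 (g3 s)) (U1 s) h.
  + exact: zero (esup_ge0 (g2 s)) (U2 s) h.
have EL : [set s | 0 <= s /\ lower_mink leb2 dist2 2 B s = 0%E] =
          [set s | 0 <= s /\ lower_mink leb3 dist3 3 ((@gg R) @` B) s = 0%E].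
  apply/seteqP; split => s [s0 h]; (split; first exact: s0).
  + exact: (zero _ _ _ (einf_ge0 (g3 s)) (L1 s) h).
  + exact: (zero _ _ _ (einf_ge0 (g2 s)) (L2 s) h).
split; [|split].
- rewrite /upper_box_dim_unb /upper_box_dim2 /upper_box_dim3 /upper_box_dim.
  by rewrite -/B EU.
- rewrite /lower_box_dim_unb /lower_box_dim2 /lower_box_dim3 /lower_box_dim.
  by rewrite -/B EL.
- rewrite /nondeg_unb /nondeg2 /nondeg3 /mink_nondegenerate -/B.
  move=> [s [s0 [hl [_ hu]]]]; exists s; split; first exact: s0.
  split; [|split].
  + rewrite lt_neqAle einf_ge0 ?andbT; last exact: g3.
    apply/eqP => h0; have := L2 s; rewrite /lower_mink in hl h0.
    rewrite -h0 mule0 => h; move: hl; rewrite ltNge h; by [].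
  + exact: einf_le_esup.
  + apply: le_lt_trans (U1 s) _; move: hu (esup_ge0 (g2 s)); rewrite /upper_mink.
    case: (limf_esup _ _) => [r| |] hu0 hg; [by rewrite -EFinM ltry|by rewrite ltxx in hu0|by rewrite leeNy_eq in hg].
Qed.
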